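(* Consider a neutral evolutionary model on $N$ sites given by a replacement rule $p$ satisfying the fixation assumption described in the context, with replacement probabilities $e_{ij}$, death rates $d_i$ and site-specific fixation probabilities $\rho_i$. Then for each $i=1,\ldots,N$, $$d_i\rho_i=\sum_{j=1}^N e_{ij}\rho_j.$$
   Context: There are $N$ sites $1,\ldots,N$, each always occupied by one individual of type M (mutant) or R (resident); a state is $\mathbf{s}\in\{\mathrm{M},\mathrm{R}\}^N$. A replacement event is a pair $(R,\alpha)$ with $R\subseteq\{1,\ldots,N\}$ and $\alpha:R\to\{1,\ldots,N\}$. A replacement rule is a probability distribution $p(R,\alpha)$ on replacement events, independent of the state. The evolutionary Markov chain: at each time-step an event $(R,\alpha)$ is drawn with probability $p(R,\alpha)$ and the new state is $s_i'=s_i$ if $i\notin R$, $s_i'=s_{\alpha(i)}$ if $i\in R$. Fixation assumption: there exist a site $i$ and a finite sequence of replacement events, each of positive probability, such that if these events occur consecutively (from any initial state) every site ends up carrying the type initially at site $i$. Define $e_{ij}=\sum_{(R,\alpha):\, j\in R,\ \alpha(j)=i}p(R,\alpha)$ and $d_i=\sum_j e_{ji}=\sum_{(R,\alpha):\, i\in R}p(R,\alpha)$. The site-specific fixation probability $\rho_i$ is the probability that the chain started from the state with M at site $i$ and R elsewhere is eventually absorbed in $(\mathrm{M},\ldots,\mathrm{M})$. *)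

(* Defs.v *)
From HB Require Import structures.
From mathcomp Require Import all_boot all_order all_algebra.
From mathcomp Require Import all_classical all_reals all_analysis.
Set Implicit Arguments. Unset Strict Implicit. Unset Printing Implicit Defensive.
Import Order.TTheory GRing.Theory Num.Theory numFieldNormedType.Exports.
Local Open Scope ring_scope.

(* Sites are 'I_N.  A state assigns a type to every site: true = M (mutant),
   false = R (resident). *)
Definition state (N : nat) := {ffun 'I_N -> bool}.

(* A replacement event (R, alpha).  alpha is stored as a total map on sites;
   only its restriction to R is ever used. *)
Definition event (N : nat) := ({set 'I_N} * {ffun 'I_N -> 'I_N})%type.

Definition step (N : nat) (e : event N) (s : state N) : state N :=
  [ffun i => if i \in e.1 then s (e.2 i) else s i].

Definition run (N : nat) (es : seq (event N)) (s : state N) : state N :=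
  foldl (fun s e => step e s) s es.

Definition is_rule (R : realType) (N : nat) (p : event N -> R) : Prop :=
  (forall e, 0 <= p e) /\ \sum_(e : event N) p e = 1.

Definition fixation_assumption (R : realType) (N : nat) (p : event N -> R) : Prop :=
  exists (i : 'I_N) (es : seq (event N)),
    (forall e, e \in es -> 0 < p e) /\
    (forall s : state N, run es s = [ffun _ => s i]).

Definition erep (R : realType) (N : nat) (p : event N -> R) (i j : 'I_N) : R :=
  \sum_(e : event N | (j \in e.1) && (e.2 j == i)) p e.

Definition drate (R : realType) (N : nat) (p : event N -> R) (i : 'I_N) : R :=
  \sum_(e : event N | i \in e.1) p e.

Definition trans (R : realType) (N : nat) (p : event N -> R) (s s' : state N) : R :=
  \sum_(e : event N | step e s == s') p e.

Fixpoint distn (R : realType) (N : nat) (p : event N -> R) (s0 : state N) (n : nat)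
  : state N -> R :=
  match n with
  | 0 => fun s => if s == s0 then 1 else 0
  | n'.+1 => fun s' => \sum_(s : state N) distn p s0 n' s * trans p s s'
  end.

Definition allM (N : nat) : state N := [ffun _ => true].
Definition single_mutant (N : nat) (i : 'I_N) : state N := [ffun j => j == i].

(* Since (M,...,M) is absorbing,
   the event "absorbed by time n" is increasing in n with union "eventually
   absorbed", so its probability is the limit of P(X_n = (M,...,M)). *)
Definition rho (R : realType) (N : nat) (p : event N -> R) (i : 'I_N) : R :=
  limn (fun n => distn p (single_mutant i) n (allM N)).

(* Main.v *)
Require Import Defs.
From HB Require Import structures.
From mathcomp Require Import all_boot all_order all_algebra.
From mathcomp Require Import all_classical all_reals all_analysis.
From mathcomp Require Import ring lra.
Import Order.TTheory GRing.Theory Num.Theory numFieldNormedType.Exports.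
Local Open Scope ring_scope.
Set Implicit Arguments. Unset Strict Implicit. Unset Printing Implicit Defensive.

Section Maps.
Variable N : nat.
Definition mp := {ffun 'I_N -> 'I_N}.
Definition mstep (e : event N) (a : mp) : mp :=
  [ffun k => if k \in e.1 then a (e.2 k) else a k].
Definition mrun (es : seq (event N)) (a : mp) : mp :=
  foldl (fun a e => mstep e a) a es.
Definition scomp (s : state N) (b : mp) : state N := [ffun k => s (b k)].
Definition mcomp (a b : mp) : mp := [ffun k => a (b k)].
Definition idm : mp := [ffun k => k].
Definition isc (b : mp) := [exists k, b == [ffun _ => k]].

Lemma mcompA a b c : mcomp a (mcomp b c) = mcomp (mcomp a b) c.
Proof. by apply/ffunP => k; rewrite !ffunE. Qed.
Lemma mcomp1 a : mcomp a idm = a.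
Proof. by apply/ffunP => k; rewrite !ffunE. Qed.
Lemma mcomp1l a : mcomp idm a = a.
Proof. by apply/ffunP => k; rewrite !ffunE. Qed.
Lemma mcompS a f b : mcomp a (mstep f b) = mstep f (mcomp a b).
Proof. by apply/ffunP => k; rewrite !ffunE; case: ifP => _; rewrite ?ffunE. Qed.
Lemma mstepE e c : mstep e c = mcomp c (mstep e idm).
Proof. by apply/ffunP => k; rewrite !ffunE; case: ifP => _; rewrite ?ffunE. Qed.
Lemma scompS s e b : scomp s (mstep e b) = step e (scomp s b).
Proof. by apply/ffunP => k; rewrite !ffunE; case: ifP => _; rewrite ?ffunE. Qed.
Lemma scomp1 s : scomp s idm = s.
Proof. by apply/ffunP => k; rewrite !ffunE. Qed.
Lemma scompC s a b : scomp s (mcomp a b) = scomp (scomp s a) b.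
Proof. by apply/ffunP => k; rewrite !ffunE. Qed.
Lemma scomp_run s es b : scomp s (mrun es b) = run es (scomp s b).
Proof. by elim: es b => [|e es IH] b //=; rewrite IH scompS. Qed.
Lemma scomp_allM s b : (scomp s b == allM N) = [forall k, s (b k)].
Proof.
apply/eqP/forallP => [H k|H]; last by apply/ffunP => k; rewrite !ffunE H.
by have := congr1 (fun f : state N => f k) H; rewrite !ffunE.
Qed.
Lemma isc_l b c : isc b -> isc (mcomp b c).
Proof. by case/existsP => k /eqP ->; apply/existsP; exists k; apply/eqP/ffunP => x; rewrite !ffunE. Qed.
Lemma isc_r b c : isc c -> isc (mcomp b c).
Proof. by case/existsP => k /eqP ->; apply/existsP; exists (b k); apply/eqP/ffunP => x; rewrite !ffunE. Qed.
Lemma isc_mstep e b : isc b -> isc (mstep e b).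
Proof. by move=> h; rewrite mstepE isc_l. Qed.
End Maps.
Section Chain.
Variables (R : realType) (N : nat) (p : event N -> R).
Hypothesis hp : is_rule p.

Lemma p_ge0 e : 0 <= p e. Proof. by case: hp. Qed.
Lemma p_sum : \sum_e p e = 1. Proof. by case: hp. Qed.

Lemma sumK (T : finType) (f : event N -> T) (G : T -> R) :
  \sum_(b : T) (\sum_(e | f e == b) p e) * G b = \sum_e p e * G (f e).
Proof.
rewrite (partition_big f xpredT) //=; apply: eq_bigr => b _.
by rewrite big_distrl; apply: eq_bigr => e /eqP ->.
Qed.

Lemma sum_ind (T : finType) (P : pred T) (F : T -> R) :
  \sum_(x | P x) F x = \sum_x F x * (P x)%:R.
Proof. by rewrite big_mkcond; apply: eq_bigr => x _; case: (P x); rewrite ?mulr1 ?mulr0. Qed.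

Definition Ku (a b : mp N) : R := \sum_(e | mstep e a == b) p e.

Fixpoint W (n : nat) : mp N -> R :=
  match n with
  | 0 => fun b => (b == idm N)%:R
  | n'.+1 => fun b => \sum_c W n' c * Ku c b
  end.

Lemma W0_sum (H : mp N -> R) : \sum_b W 0 b * H b = H (idm N).
Proof.
rewrite (bigD1 (idm N)) //= eqxx mul1r big1 ?addr0 // => b /negbTE.
by move=> ->; rewrite mul0r.
Qed.

Lemma Wfwd n (H : mp N -> R) :
  \sum_b W n.+1 b * H b = \sum_c W n c * \sum_e p e * H (mstep e c).
Proof.
rewrite /=; under eq_bigr do rewrite big_distrl /=.
rewrite exchange_big /=; apply: eq_bigr => c _.
rewrite -sumK big_distrr /=; apply: eq_bigr => b _; by rewrite mulrA.
Qed.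

Lemma W_ge0 n b : 0 <= W n b.
Proof.
elim: n b => [|n IH] b /=; first by case: (_ == _).
apply: sumr_ge0 => c _; apply: mulr_ge0 => //; apply: sumr_ge0 => e _; exact: p_ge0.
Qed.

Lemma W_sum n : \sum_b W n b = 1.
Proof.
elim: n => [|n IH]; first by rewrite /= (bigD1 (idm N)) //= eqxx big1 ?addr0 // => b /negbTE ->.
have := Wfwd n (fun=> 1); under eq_bigr do rewrite mulr1; move=> ->.
rewrite -[RHS]IH; apply: eq_bigr => c _.
by under eq_bigr do rewrite mulr1; rewrite p_sum mulr1.
Qed.

Lemma bridge s0 n t : distn p s0 n t = \sum_b W n b * (scomp s0 b == t)%:R.
Proof.
elim: n t => [|n IH] t.
  by rewrite W0_sum scomp1 /= eq_sym; case: (_ == _).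
rewrite /= Wfwd.
under eq_bigr do rewrite IH big_distrl /=.
rewrite exchange_big /=; apply: eq_bigr => b _.
under eq_bigr do rewrite -mulrA.
rewrite -big_distrr /=; congr (_ * _).
rewrite [LHS](bigD1 (scomp s0 b)) //= eqxx mul1r big1 ?addr0; last first.
  by move=> s hs; rewrite eq_sym (negbTE hs) mul0r.
rewrite /trans.
rewrite sum_ind; apply: eq_bigr => e _; by rewrite scompS.
Qed.

Definition me (e : event N) : mp N := mstep e (idm N).

Lemma Wbwd n (H : mp N -> R) :
  \sum_b W n.+1 b * H b = \sum_e p e * \sum_b W n b * H (mcomp (me e) b).
Proof.
elim: n H => [|n IH] H.
  rewrite Wfwd W0_sum; apply: eq_bigr => e _; by rewrite W0_sum mcomp1.
rewrite Wfwd (IH (fun c => \sum_e p e * H (mstep e c))).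
apply: eq_bigr => e _; congr (_ * _); rewrite Wfwd.
apply: eq_bigr => b _; congr (_ * _); apply: eq_bigr => f _; by rewrite mcompS.
Qed.

Lemma CK m n (H : mp N -> R) :
  \sum_b W (m + n) b * H b = \sum_b W m b * \sum_b' W n b' * H (mcomp b b').
Proof.
elim: m H => [|m IH] H.
  by rewrite add0n W0_sum; apply: eq_bigr => b _; rewrite mcomp1l.
rewrite addSn Wbwd Wbwd; apply: eq_bigr => e _; congr (_ * _).
rewrite IH; apply: eq_bigr => b _; congr (_ * _); apply: eq_bigr => b' _.
by rewrite mcompA.
Qed.


Definition q n := \sum_b W n b * (~~ isc b)%:R.

Lemma ind_ge0 (b : bool) : 0 <= b%:R :> R. Proof. by case: b. Qed.
Lemma ind_le1 (b : bool) : b%:R <= 1 :> R. Proof. by case: b. Qed.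

Lemma q_ge0 n : 0 <= q n.
Proof. by apply: sumr_ge0 => b _; apply: mulr_ge0; [exact: W_ge0|exact: ind_ge0]. Qed.

Lemma sumW_ind_le m (P : pred (mp N)) : \sum_b' W m b' * (P b')%:R <= 1.
Proof.
rewrite -[leRHS](W_sum m); apply: ler_sum => b' _.
by rewrite -[leRHS]mulr1 ler_wpM2l ?W_ge0 ?ind_le1.
Qed.

Lemma inner0 m b : isc b -> \sum_b' W m b' * (~~ isc (mcomp b b'))%:R = 0.
Proof. by move=> hb; apply: big1 => b' _; rewrite isc_l // mulr0. Qed.

Lemma inner_le1 m b : \sum_b' W m b' * (~~ isc (mcomp b b'))%:R <= (~~ isc b)%:R.
Proof.
case: (boolP (isc b)) => hb; first by rewrite inner0.
exact: sumW_ind_le.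
Qed.

Lemma q_mono n m : q (n + m) <= q n.
Proof.
rewrite /q CK; apply: ler_sum => b _; apply: ler_wpM2l; [exact: W_ge0|exact: inner_le1].
Qed.

Lemma q_noninc : nonincreasing_seq q.
Proof. by move=> m n h; rewrite -(subnKC h) q_mono. Qed.

Lemma ler_term (T : finType) (F : T -> R) x : (forall y, 0 <= F y) -> F x <= \sum_y F y.
Proof. by move=> h; rewrite (bigD1 x) //= lerDl sumr_ge0. Qed.

Lemma path_lb es : \prod_(e <- es) p e <= W (size es) (mrun es (idm N)).
Proof.
elim/last_ind: es => [|es e IH]; first by rewrite big_nil /= eqxx.
rewrite big_rcons size_rcons /= /mrun foldl_rcons -/(mrun es (idm N)).
set c := mrun es (idm N).
apply: (le_trans _ (ler_term c _)); last first.
  by move=> y; apply: mulr_ge0; [exact: W_ge0|apply: sumr_ge0 => f _; exact: p_ge0].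
apply: ler_pM => //.
- by apply: prodr_ge0 => f _; exact: p_ge0.
- exact: p_ge0.
rewrite /Ku (bigD1 e) //= lerDl; apply: sumr_ge0 => f _; exact: p_ge0.
Qed.

Lemma q_contr (es0 : seq (event N)) : isc (mrun es0 (idm N)) ->
  forall n, q (n + size es0) <= (1 - \prod_(e <- es0) p e) * q n.
Proof.
move=> hb0 n; set c0 := \prod_(e <- es0) p e.
rewrite /q CK mulr_sumr; apply: ler_sum => b _.
rewrite mulrCA; apply: ler_wpM2l; first exact: W_ge0.
case: (boolP (isc b)) => hb; first by rewrite inner0 // mulr0.
rewrite mulr1 (bigD1 (mrun es0 (idm N))) //= isc_r // mulr0 add0r.
apply: (@le_trans _ _ (\sum_(b' | b' != mrun es0 (idm N)) W (size es0) b')).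
  by apply: ler_sum => b' _; rewrite -[leRHS]mulr1 ler_wpM2l ?W_ge0 ?ind_le1.
have := W_sum (size es0); rewrite (bigD1 (mrun es0 (idm N))) //= => E.
have := path_lb es0; rewrite -/c0 -E; lra.
Qed.
Lemma isc_run0 (i0 : 'I_N) (es0 : seq (event N)) :
  (forall s : state N, run es0 s = [ffun _ => s i0]) -> isc (mrun es0 (idm N)).
Proof.
move=> hrun; apply/existsP; exists i0; apply/eqP/ffunP => k; rewrite ffunE.
have := congr1 (fun f : state N => f k) (hrun [ffun x => x == i0]).
rewrite -[X in run es0 X](scomp1) -scomp_run !ffunE eqxx.
by move/eqP.
Qed.

Definition G n (j : 'I_N) := \sum_b W n b * (scomp (single_mutant j) b == allM N)%:R.

Lemma scomp_allM' b : scomp (allM N) b = allM N.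
Proof. by apply/ffunP => k; rewrite !ffunE. Qed.

Lemma G_mono j n m : G n j <= G (n + m) j.
Proof.
rewrite /G CK; apply: ler_sum => b _; apply: ler_wpM2l; first exact: W_ge0.
case: eqP => h /=; last by apply: sumr_ge0 => b' _; apply: mulr_ge0; [exact: W_ge0|exact: ind_ge0].
rewrite -[leLHS](W_sum m) le_eqVlt; apply/orP; left; apply/eqP; apply: eq_bigr => b' _.
by rewrite scompC h scomp_allM' eqxx mulr1.
Qed.

Lemma G_le1 j n : G n j <= 1.
Proof. exact: sumW_ind_le. Qed.

Lemma G_ge0 j n : 0 <= G n j.
Proof. by apply: sumr_ge0 => b _; apply: mulr_ge0; [exact: W_ge0|exact: ind_ge0]. Qed.

Lemma point_bound (s : state N) (b : mp N) :
  let X : R := (scomp s b == allM N)%:R - \sum_(j | s j) (scomp (single_mutant j) b == allM N)%:R in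
  (0 <= X) && (X <= (~~ isc b)%:R).
Proof.
rewrite /=.
case: (boolP (isc b)) => [/existsP[k /eqP ->]|hb].
  have E : forall s' : state N, (scomp s' [ffun _ => k] == allM N) = s' k.
    move=> s'; rewrite scomp_allM; apply/forallP/idP => [h|h x]; first by have := h k; rewrite ffunE.
    by rewrite ffunE.
  rewrite E; under eq_bigr do rewrite E ffunE.
  case hk: (s k).
    rewrite (bigD1 k) //= eqxx big1 ?addr0 ?subrr ?lexx //.
    by move=> j /andP[_ hj]; rewrite eq_sym (negbTE hj).
  rewrite big1 ?subrr ?lexx // => j hj.
  by case: eqP => // ekj; move: hk; rewrite ekj hj.
rewrite big1 ?subr0 /=; first by rewrite ind_ge0 ind_le1.
move=> j _; case: eqP => // h; case/negP: hb; apply/existsP; exists j.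
apply/eqP/ffunP => x; have := congr1 (fun f : state N => f x) h.
by rewrite !ffunE => /eqP.
Qed.

Lemma approx s n :
  `| \sum_b W n b * (scomp s b == allM N)%:R - \sum_(j | s j) G n j | <= q n.
Proof.
rewrite /G exchange_big /=.
under [X in _ - X]eq_bigr do rewrite -mulr_sumr.
rewrite -sumrB.
under eq_bigr do rewrite -mulrBr.
have h0 : 0 <= \sum_b W n b * ((scomp s b == allM N)%:R
   - \sum_(j | s j) (scomp (single_mutant j) b == allM N)%:R).
  by apply: sumr_ge0 => b _; apply: mulr_ge0; [exact: W_ge0|case/andP: (point_bound s b)].
rewrite ger0_norm //; apply: ler_sum => b _; apply: ler_wpM2l; first exact: W_ge0.
by case/andP: (point_bound s b).
Qed.
Lemma first_step n i : G n.+1 i =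
  \sum_e p e * \sum_b W n b * (scomp (step e (single_mutant i)) b == allM N)%:R.
Proof.
rewrite /G Wbwd; apply: eq_bigr => e _; congr (_ * _); apply: eq_bigr => b _.
by rewrite scompC /me scompS scomp1.
Qed.

Lemma one_sub_drate i : 1 - drate p i = \sum_e p e * (i \notin e.1)%:R.
Proof.
rewrite -[X in X - _]p_sum /drate (bigID (fun e : event N => i \in e.1)) /= addrC addrK.
by rewrite sum_ind.
Qed.

Lemma step_single (e : event N) (i k : 'I_N) :
  step e (single_mutant i) k = if k \in e.1 then e.2 k == i else k == i.
Proof. by rewrite !ffunE; case: ifP => _; rewrite ?ffunE. Qed.

Lemma alg i (v : 'I_N -> R) :
  \sum_e p e * \sum_(k | step e (single_mutant i) k) v k
  = (1 - drate p i) * v i + \sum_k erep p i k * v k.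
Proof.
have E1 : forall e, \sum_(k | step e (single_mutant i) k) v k =
    \sum_k v k * (step e (single_mutant i) k)%:R by move=> e; rewrite sum_ind.
under eq_bigr do rewrite E1 mulr_sumr.
rewrite exchange_big /=.
have E2 : forall k, \sum_e p e * (v k * (step e (single_mutant i) k)%:R) =
   v k * (erep p i k + (k == i)%:R * (1 - drate p i)).
  move=> k; rewrite one_sub_drate /erep [X in _ = _ * (X + _)]sum_ind (mulr_sumr _ _ _ ((k == i)%:R)) -big_split /= mulr_sumr.
  apply: eq_bigr => e _; rewrite step_single.
  case: (eqVneq k i) => [->|hki]; rewrite ?eqxx ?(negbTE hki);
    case: (_ \in e.1); case: (e.2 _ == i); rewrite /= ?mulr0 ?mul0r ?mulr1 ?mul1r ?addr0 ?add0r; lra.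
under eq_bigr do rewrite E2 mulrDr.
rewrite big_split /= addrC; congr (_ + _); last by apply: eq_bigr => k _; rewrite mulrC.
rewrite (bigD1 i) //= eqxx big1 ?addr0; first by rewrite mul1r mulrC.
by move=> k hk; rewrite (negbTE hk) mul0r mulr0.
Qed.
End Chain.
Local Open Scope classical_set_scope.

Lemma cvg_sumR (R : realType) (I : Type) (r : seq I) (Ff : I -> nat -> R) (Fa : I -> R) :
  (forall k, Ff k @ \oo --> Fa k) ->
  (fun n => \sum_(k <- r) Ff k n) @ \oo --> \sum_(k <- r) Fa k.
Proof.
move=> h; elim: r => [|k r IH].
  rewrite big_nil; under eq_fun do rewrite big_nil; exact: cvg_cst.
rewrite big_cons; under eq_fun do rewrite big_cons.
exact: cvgD.
Qed.

Theorem mainTheorem7 (R : realType) (N : nat) (p : event N -> R)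
  (hp : is_rule p) (hfix : fixation_assumption p) (i : 'I_N) :
  drate p i * rho p i = \sum_(j < N) erep p i j * rho p j.
Proof.
case: hfix => i0 [es0 [hpos hrun]].
set c0 := \prod_(e <- es0) p e.
have c0_gt0 : 0 < c0.
  by rewrite /c0 big_seq; apply: prodr_gt0 => e he; exact: hpos.
have hb0 := isc_run0 hrun.
have qcv : cvgn (q p).
  apply: nonincreasing_is_cvgn; first exact: q_noninc.
  by exists 0 => _ [n _ <-]; exact: q_ge0.
set l := limn (q p).
have ql : q p @ \oo --> l := qcv.
have l_ge0 : 0 <= l.
  apply: (ler_cvg_to (cvg_cst 0) ql); apply: nearW => n; exact: q_ge0.
have l_le : l <= (1 - c0) * l.
  have h1 : (fun n => q p (n + size es0)) @ \oo --> l.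
    by have := ql; rewrite -(cvg_shiftn (size es0)).
  have h2 : (fun n => (1 - c0) * q p n) @ \oo --> (1 - c0) * l by apply: cvgMl_tmp.
  apply: (ler_cvg_to h1 h2); apply: nearW => n; exact: q_contr.
have l0 : l = 0 by nra.
have q0 : q p @ \oo --> 0 by rewrite -l0.
have Gcv : forall j, (fun n => G p n j) @ \oo --> rho p j.
  move=> j.
  have E : (fun n => distn p (single_mutant j) n (allM N)) = (fun n => G p n j).
    by apply/funext => n; rewrite bridge.
  rewrite /rho E; apply: nondecreasing_is_cvgn.
    by move=> m n h; rewrite -(subnKC h) G_mono.
  by exists 1 => _ [n _ <-]; exact: G_le1.
pose Y n := G p n.+1 i - ((1 - drate p i) * G p n i + \sum_k erep p i k * G p n k).
have Yb : forall n, `|Y n| <= q p n.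
  move=> n; rewrite /Y first_step -(alg hp i (fun k => G p n k)) -sumrB.
  under eq_bigr do rewrite -mulrBr.
  apply: (le_trans (ler_norm_sum _ _ _)).
  apply: (@le_trans _ _ (\sum_e p e * q p n)); last by rewrite -mulr_suml p_sum ?mul1r.
  apply: ler_sum => e _; rewrite normrM ger0_norm; last exact: p_ge0.
  apply: ler_wpM2l; first exact: p_ge0.
  exact: approx.
have Y0 : Y @ \oo --> 0.
  apply: (@squeeze_cvgr _ _ _ _ (fun n => - q p n) (q p)).
  - by apply: nearW => n; rewrite -ler_norml.
  - by rewrite -oppr0; apply: cvgN.
  - exact: q0.
have Yl : Y @ \oo --> rho p i - ((1 - drate p i) * rho p i + \sum_k erep p i k * rho p k).
  apply: cvgB.
    by have := Gcv i; rewrite -cvg_shiftS.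
  apply: cvgD; first exact: cvgMl_tmp.
  apply: cvg_sumR => k; exact: cvgMl_tmp.
have E := cvg_unique (@norm_hausdorff _ _) Yl Y0.
have {}E := E (fmap_proper_filter Y eventually_filter); lra.
Qed.
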